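(* Let $m,n$ be positive integers and let $K_{m,n}$ be the complete bipartite graph with part sizes $m$ and $n$. Then the number of shellings of $K_{m,n}$ is $$F(K_{m,n})=\frac{m!\,n!\,(mn)!}{(m+n-1)!}.$$
   Context: For a finite undirected graph $G=(V,E)$, a shelling of $G$ is a total ordering $\sigma(1),\sigma(2),\ldots,\sigma(|E|)$ of the edge set $E$ such that for every $k=1,\ldots,|E|$ the edges $\sigma(1),\ldots,\sigma(k)$ form a connected subgraph of $G$. $F(G)$ denotes the number of shellings of $G$. *)

(* Defs.v *)
From mathcomp Require Import all_boot.
Set Implicit Arguments. Unset Strict Implicit. Unset Printing Implicit Defensive.

(* A finite simple graph on vertex type T is given by its edge set
   E : {set {set T}}, each edge being a 2-element subset of T. *)

Definition edge_adj (T : finType) (S : seq {set T}) : rel T :=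
  fun u v => (u != v) && ([set u; v] \in S).

Definition subgraph_vertices (T : finType) (S : seq {set T}) : {set T} :=
  \bigcup_(e <- S) e.

Definition edges_connected (T : finType) (S : seq {set T}) : bool :=
  [forall u in subgraph_vertices S, forall v in subgraph_vertices S,
     connect (edge_adj S) u v].

Definition is_shelling (T : finType) (E : {set {set T}}) (s : seq {set T}) : bool :=
  [&& uniq s, size s == #|E|, all (fun e => e \in E) s &
      [forall k : 'I_#|E|, edges_connected (take k.+1 s)]].

Definition num_shellings (T : finType) (E : {set {set T}}) : nat :=
  #|[set t : #|E|.-tuple {set T} | is_shelling E t]|.

Definition Kmn_edges (m n : nat) : {set {set ('I_m + 'I_n)%type}} :=
  [set [set inl i; inr j] | i : 'I_m, j : 'I_n].

(* Main.v *)
Require Import Defs.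
From mathcomp Require Import all_boot all_algebra.
From mathcomp Require Import ring zify.
Set Implicit Arguments. Unset Strict Implicit. Unset Printing Implicit Defensive.


Section AllSeqs.
Variable X : finType.

Fixpoint allseqs (r : nat) : seq (seq X) :=
  if r is r'.+1 then flatten [seq [seq x :: s | s <- allseqs r'] | x <- enum X]
  else [:: [::]].

Lemma mem_allseqs r s : (s \in allseqs r) = (size s == r).
Proof.
elim: r s => [|r IH] [|x s] //.
- rewrite /=; apply/negP => /flattenP[l /mapP[y _ ->]] /mapP[t _] //.
- rewrite /= eqSS -IH; apply/flattenP/idP.
  + by case=> l /mapP[y _ ->] /mapP[t Ht [_ ->]].
  + move=> Hs; exists [seq x :: s0 | s0 <- allseqs r]; first by apply/mapP; exists x; rewrite ?mem_enum.
    by apply/mapP; exists s.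
Qed.

Lemma uniq_allseqs r : uniq (allseqs r).
Proof.
elim: r => [|r IH] //=.
elim: (enum X) (enum_uniq X) => [|x e IHe] //= /andP[xe ue].
rewrite cat_uniq IHe // andbT map_inj_uniq ?IH //=; last by move=> a b [].
apply/hasPn => s /flattenP[l /mapP[y ye ->]] /mapP[t _ ->].
apply/negP => /mapP[t' _ [exy _]]; by rewrite -exy ye in xe.
Qed.

Lemma count_allseqsS (Q : pred (seq X)) r :
  count Q (allseqs r.+1) = \sum_(x : X) count (fun s => Q (x :: s)) (allseqs r).
Proof.
rewrite /= count_flatten sumnE big_map -[in RHS]big_enum /=.
rewrite big_map; apply: eq_bigr => x _; by rewrite count_map.
Qed.

Lemma card_tuples (Q : pred (seq X)) r :
  #|[set t : r.-tuple X | Q t]| = count Q (allseqs r).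
Proof.
have -> : #|[set t : r.-tuple X | Q t]| = count Q (map val (enum {: r.-tuple X})).
  rewrite count_map cardsE cardE /enum_mem size_filter.
rewrite count_filter; apply: eq_count => t /=. by rewrite andbT.
suff /permP-> : perm_eq (map val (enum {: r.-tuple X})) (allseqs r) by [].
apply: uniq_perm.
- rewrite map_inj_uniq ?enum_uniq //; exact: val_inj.
- exact: uniq_allseqs.
move=> s; rewrite mem_allseqs; apply/mapP/idP.
- by case=> t _ ->; rewrite size_tuple.
- move=> Hs; exists (Tuple Hs); by rewrite ?mem_enum.
Qed.
End AllSeqs.


Lemma count_transfer (X P : finType) (f : P -> X) (finj : injective f) r :
  forall (Q : pred (seq X)), (forall s, Q s -> all (fun x => x \in f @: setT) s) ->
  count Q (allseqs X r) = count (fun u => Q (map f u)) (allseqs P r).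
Proof.
elim: r => [|r IH] Q HQ; first by [].
rewrite !count_allseqsS.
rewrite (bigID (mem (f @: setT))) /= [X in _ + X]big1 ?addn0; last first.
  move=> x xn; apply/eqP; rewrite -leqn0 leqNgt -has_count; apply/hasP => -[s _ Hs].
  by move: (HQ _ Hs) => /= /andP[xin _]; rewrite xin in xn.
rewrite big_imset /=; last by move=> a b _ _; apply: finj.
rewrite big_mkcond /=; apply: eq_bigr => y _; rewrite in_setT.
apply: (IH (fun s => Q (f y :: s))) => s /HQ /= /andP[] //.
Qed.


Section K.
Variables m n : nat.
Local Notation T := ('I_m + 'I_n)%type.
Local Notation P := ('I_m * 'I_n)%type.

Definition fe (x : P) : {set T} := [set inl x.1; inr x.2].

Lemma fe_inj : injective fe.
Proof.
move=> [a b] [c d] /setP H.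
have := H (inl a); have := H (inr b); rewrite !inE /=.
rewrite !eqxx => /esym/eqP[->] /esym/orP[/eqP[->] //|].
by [].
Qed.

Lemma Kmn_fe : Kmn_edges m n = fe @: setT.
Proof.
apply/setP => e; apply/imset2P/imsetP.
- by case=> i j _ _ ->; exists (i, j).
- by case=> -[i j] _ ->; exists i j.
Qed.

Lemma card_Kmn : #|Kmn_edges m n| = m * n.
Proof. by rewrite Kmn_fe card_imset ?cardsT ?card_prod ?card_ord //; apply: fe_inj. Qed.

Lemma eq_ll (a b : 'I_m) : (inl a == inl b :> T) = (a == b).
Proof. by apply/eqP/eqP => [[]|->]. Qed.
Lemma eq_rr (a b : 'I_n) : (inr a == inr b :> T) = (a == b).
Proof. by apply/eqP/eqP => [[]|->]. Qed.
Lemma eq_lr a b : (inl a == inr b :> T) = false. Proof. by []. Qed.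
Lemma eq_rl a b : (inr a == inl b :> T) = false. Proof. by []. Qed.

Definition meets (x : P) (pre : seq P) := has (fun y => (y.1 == x.1) || (y.2 == x.2)) pre.

Definition conn (w : seq P) := edges_connected (map fe w).

Lemma mem_vert w v : (v \in subgraph_vertices (map fe w)) = has (fun y => v \in fe y) w.
Proof.
rewrite /subgraph_vertices big_map; elim: w => [|y w IH]; first by rewrite big_nil inE.
by rewrite big_cons inE IH.
Qed.

Lemma adj_fe w y : y \in w -> edge_adj (map fe w) (inl y.1) (inr y.2).
Proof. by move=> yw; rewrite /edge_adj /=; exact: (map_f fe yw). Qed.

Lemma adj_sym w : symmetric (edge_adj (map fe w)).
Proof. by move=> u v; rewrite /edge_adj eq_sym setUC. Qed.

Lemma adj_inv w u v : edge_adj (map fe w) u v -> exists2 y, y \in w & (u \in fe y) && (v \in fe y).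
Proof.
case/andP=> _ /mapP[y yw E]; exists y => //.
by rewrite -E !inE !eqxx orbT.
Qed.

Lemma adj_sub w x : subrel (edge_adj (map fe w)) (edge_adj (map fe (rcons w x))).
Proof.
move=> u v /andP[uv H]; rewrite /edge_adj uv /= map_rcons mem_rcons inE H orbT //.
Qed.

Lemma conn1 x : conn [:: x].
Proof.
have MV := mem_vert [:: x]; rewrite /= in MV.
rewrite /conn /=.
apply/forallP => u; apply/implyP; rewrite MV /= orbF => Hu.
apply/forallP => v; apply/implyP; rewrite MV /= orbF => Hv.
move: Hu Hv; rewrite !inE => /orP[] /eqP -> /orP[] /eqP ->; rewrite ?connect0 //.
- by apply: connect1; exact: (adj_fe (w := [:: x]) (mem_head _ _)).
- apply: connect1; have := adj_fe (w := [:: x]) (mem_head _ _).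
  by rewrite adj_sym.
Qed.

Lemma conn_rcons pre x : pre != [::] -> conn pre -> conn (rcons pre x) = meets x pre.
Proof.
case: pre => [|y0 pre] // _ Hc.
set w := y0 :: pre.
have symc := sym_connect_sym (adj_sym (rcons w x)).
have y0w : y0 \in w by rewrite inE eqxx.
have oldc : forall v, v \in subgraph_vertices (map fe w) ->
    connect (edge_adj (map fe (rcons w x))) (inl y0.1) v.
  move=> v Hv.
  have : connect (edge_adj (map fe w)) (inl y0.1) v.
    move/forallP: Hc => /(_ (inl y0.1)) /implyP; rewrite mem_vert.
    have -> : has (fun y => inl y0.1 \in fe y) w by apply/hasP; exists y0; rewrite // !inE eqxx.
    by move=> /(_ isT) /forallP /(_ v) /implyP /(_ Hv).
  apply: connect_sub => a b /(adj_sub x) H; exact: connect1.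
apply/idP/idP.
- apply: contraLR => nm.
  have vb : inl y0.1 \in subgraph_vertices (map fe (rcons w x)).
    by rewrite mem_vert; apply/hasP; exists y0; rewrite ?mem_rcons ?inE ?eqxx ?orbT.
  have vx : inl x.1 \in subgraph_vertices (map fe (rcons w x)).
    by rewrite mem_vert; apply/hasP; exists x; rewrite ?mem_rcons ?inE ?eqxx.
  apply/negP; rewrite /conn /edges_connected => /forallP /(_ (inl x.1)) /implyP /(_ vx) /forallP /(_ (inl y0.1)) /implyP /(_ vb).
  case/connectP=> p.
  have cl : forall q a, a \in fe x -> path (edge_adj (map fe (rcons w x))) a q -> last a q \in fe x.
    elim=> [|b q IH] a //= ax /andP[ab pp]; apply: IH pp.
    case: (adj_inv (w := rcons w x) ab) => y; rewrite mem_rcons inE => /orP[/eqP -> /andP[] //|yw].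
    move=> /andP[ay _]; exfalso; move/negP: nm; apply; apply/hasP; exists y => //.
    move: ax ay; rewrite !inE => /orP[]/eqP-> /orP[]/eqP //.
    * by case=> ->; rewrite eqxx.
    * by case=> ->; rewrite eqxx orbT.
  move=> pth el; have H1 : inl x.1 \in fe x by rewrite /fe !inE eqxx.
  have := cl p _ H1 pth; rewrite -el /fe in_set2 eq_ll eq_lr orbF => e.
  move: nm => /hasPn /(_ y0 y0w); by rewrite e.
- case/hasP=> y yw /orP[] e.
  + have Hl : connect (edge_adj (map fe (rcons w x))) (inl y0.1) (inl x.1).
      by apply: oldc; rewrite mem_vert; apply/hasP; exists y; rewrite // /fe in_set2 eq_ll eq_sym e.
    have Hr : connect (edge_adj (map fe (rcons w x))) (inl y0.1) (inr x.2).
      apply: connect_trans Hl _; apply: connect1; apply: adj_fe; by rewrite mem_rcons mem_head.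
    have allc : forall v, v \in subgraph_vertices (map fe (rcons w x)) ->
        connect (edge_adj (map fe (rcons w x))) (inl y0.1) v.
      move=> v; rewrite mem_vert has_rcons => /orP[] Hv.
      * by case/set2P: Hv => ->.
      * by apply: oldc; rewrite mem_vert.
    apply/forallP => u; apply/implyP => Hu; apply/forallP => v; apply/implyP => Hv.
    apply: connect_trans (allc _ Hv); rewrite symc; exact: allc.
  + have Hr : connect (edge_adj (map fe (rcons w x))) (inl y0.1) (inr x.2).
      by apply: oldc; rewrite mem_vert; apply/hasP; exists y; rewrite // /fe in_set2 eq_rl eq_rr [x.2 == _]eq_sym e.
    have Hl : connect (edge_adj (map fe (rcons w x))) (inl y0.1) (inl x.1).
      apply: connect_trans Hr _; apply: connect1; rewrite adj_sym; apply: adj_fe; by rewrite mem_rcons mem_head.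
    have allc : forall v, v \in subgraph_vertices (map fe (rcons w x)) ->
        connect (edge_adj (map fe (rcons w x))) (inl y0.1) v.
      move=> v; rewrite mem_vert has_rcons => /orP[] Hv.
      * by case/set2P: Hv => ->.
      * by apply: oldc; rewrite mem_vert.
    apply/forallP => u; apply/implyP => Hu; apply/forallP => v; apply/implyP => Hv.
    apply: connect_trans (allc _ Hv); rewrite symc; exact: allc.
Qed.
End K.


Section K2.
Variables m n : nat.
Local Notation T := ('I_m + 'I_n)%type.
Local Notation P := ('I_m * 'I_n)%type.

Fixpoint okp (pre s : seq P) : bool :=
  if s is x :: s' then [&& x \notin pre, meets x pre & okp (rcons pre x) s'] else true.

Lemma iota0S (F : pred nat) N : all F (iota 0 N.+1) = F 0 && all (fun k => F k.+1) (iota 0 N).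
Proof.
rewrite /= -(addn0 1) iotaDl all_map; congr (_ && _).
Qed.

Lemma okp_char s : forall pre, pre != [::] -> uniq pre -> conn pre ->
  okp pre s = uniq (pre ++ s) && all (fun k => conn (pre ++ take k s)) (iota 0 (size s).+1).
Proof.
elim: s => [|x s IH] pre Hne Hu Hc.
  by rewrite /= !cats0 Hu Hc.
have E : uniq (pre ++ x :: s) && all (fun k => conn (pre ++ take k (x :: s))) (iota 0 (size (x :: s)).+1)
   = uniq (rcons pre x ++ s) && all (fun k => conn (rcons pre x ++ take k s)) (iota 0 (size s).+1).
  rewrite -cat_rcons; congr (_ && _).
  rewrite [size _]/= iota0S /= cats0 Hc /=.
  rewrite cat_rcons; congr (_ && _); elim: (iota 1 (size s)) => //= k l ->; by rewrite cat_rcons.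
rewrite E /=.
have Hne' : rcons pre x != [::] by case: (pre).
case xp: (x \in pre) => /=.
  by rewrite cat_uniq rcons_uniq xp.
case mx: (meets x pre) => /=.
  have Hc' : conn (rcons pre x) by rewrite conn_rcons.
  by rewrite (IH (rcons pre x)) // rcons_uniq xp Hu.
by rewrite take0 cats0 conn_rcons // mx andbF.
Qed.

Lemma forall_iota N (F : nat -> bool) :
  [forall k : 'I_N, F k] = all F (iota 0 N).
Proof.
apply/forallP/allP => [H k|H k].
- by rewrite mem_iota add0n => /andP[_ kN]; exact: (H (Ordinal kN)).
- by apply: H; rewrite mem_iota add0n ltn_ord.
Qed.

Lemma shell_char u : 0 < m * n ->
  is_shelling (Kmn_edges m n) (map (@fe m n) u) =
  (size u == m * n) && (if u is x :: u' then okp [:: x] u' else false).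
Proof.
move=> mn0.
rewrite /is_shelling size_map card_Kmn (map_inj_uniq (@fe_inj m n)).
have -> : all (fun e => e \in Kmn_edges m n) (map (@fe m n) u).
  by rewrite Kmn_fe; apply/allP => e /mapP[y _ ->]; apply: imset_f.
case: u => [|x u'].
  by rewrite /= eq_sym (negbTE (lt0n_neq0 mn0)) andbF.
rewrite [size _]/=; case: eqP => Hs; last by rewrite andbF.
rewrite -Hs (forall_iota _ (fun k => edges_connected (take k.+1 (map (@fe m n) (x :: u'))))).
rewrite okp_char ?conn1 // !andTb; congr (_ && _).
elim: (iota 0 (size u').+1) => // k l /= ->; congr (_ && _).
by rewrite /conn /= map_take.
Qed.
End K2.


Section K3.
Variables m n : nat.
Local Notation T := ('I_m + 'I_n)%type.
Local Notation P := ('I_m * 'I_n)%type.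

Definition Cnt (pre : seq P) r := count (okp pre) (allseqs P r).
Definition SA (pre : seq P) : {set 'I_m} := [set y.1 | y in pre].
Definition SB (pre : seq P) : {set 'I_n} := [set y.2 | y in pre].

Lemma SA_rcons pre x : SA (rcons pre x) = x.1 |: SA pre.
Proof.
apply/setP => i; rewrite !inE; apply/imsetP/orP.
- case=> y; rewrite mem_rcons inE => /orP[/eqP -> ->|yp ->]; first by left.
  by right; apply/imsetP; exists y.
- case=> [/eqP ->|/imsetP[y yp ->]]; first by exists x; rewrite ?mem_rcons ?mem_head.
  by exists y; rewrite ?mem_rcons ?inE ?yp ?orbT.
Qed.

Lemma SB_rcons pre x : SB (rcons pre x) = x.2 |: SB pre.
Proof.
apply/setP => i; rewrite !inE; apply/imsetP/orP.
- case=> y; rewrite mem_rcons inE => /orP[/eqP -> ->|yp ->]; first by left.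
  by right; apply/imsetP; exists y.
- case=> [/eqP ->|/imsetP[y yp ->]]; first by exists x; rewrite ?mem_rcons ?mem_head.
  by exists y; rewrite ?mem_rcons ?inE ?yp ?orbT.
Qed.

Lemma meetsE x pre : meets x pre = (x.1 \in SA pre) || (x.2 \in SB pre).
Proof.
apply/hasP/orP.
- case=> y yp /orP[] /eqP e; [left|right]; apply/imsetP; exists y => //.
- case=> /imsetP[y yp e]; exists y => //; by rewrite e eqxx ?orbT.
Qed.

Lemma sum_ind (C : {set P}) c : \sum_(x : P) (x \in C) * c = #|C| * c.
Proof.
rewrite -sum_nat_const [in RHS]big_mkcond /=; apply: eq_bigr => x _.
by case: (x \in C); rewrite ?mul1n ?mul0n.
Qed.

Lemma CntS pre r : Cnt pre r.+1 =
  \sum_(x : P) (if (x \notin pre) && meets x pre then Cnt (rcons pre x) r else 0).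
Proof.
rewrite /Cnt count_allseqsS; apply: eq_bigr => x _.
case: ifP => H; first by apply: eq_count => s /=; rewrite andbA H.
apply/eqP; rewrite -leqn0 leqNgt -has_count; apply/hasP => -[s _] /=.
by rewrite andbA H.
Qed.

Lemma factP k : 0 < k -> k`! = k * (k - 1)`!.
Proof. by case: k => // k _; rewrite factS subn1. Qed.
Arguments factP : clear implicits.


Lemma cnt_formula r : forall pre : seq P, uniq pre -> pre != [::] -> size pre + r = m * n ->
  Cnt pre r * (#|SA pre| + #|SB pre| - 1)`! * (m + n - 1)`! =
  r`! * (#|SA pre| + n - 1)`! * (#|SB pre| + m - 1)`!.
Proof.
elim: r => [|r IH] pre Hu Hne Hs.
- have Cnt0 : Cnt pre 0 = 1 by rewrite /Cnt /=.
  rewrite addn0 in Hs.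
  have E : #|pre| = #|{: P}| by rewrite (card_uniqP Hu) Hs card_prod !card_ord.
  have allin : forall y : P, y \in pre.
    move=> y; have := subset_predT (mem pre); move/(subset_cardP E) => eqA; by rewrite eqA.
  have mn0 : 0 < m * n by rewrite -Hs; case: (pre) Hne.
  have n0 : 0 < n by move: mn0; rewrite muln_gt0 => /andP[].
  have m0 : 0 < m by move: mn0; rewrite muln_gt0 => /andP[].
  have SAT : #|SA pre| = m.
    suff -> : SA pre = setT by rewrite cardsT card_ord.
    apply/eqP; rewrite eqEsubset subsetT /=; apply/subsetP => i _; apply/imsetP.
    by exists (i, Ordinal n0).
  have SBT : #|SB pre| = n.
    suff -> : SB pre = setT by rewrite cardsT card_ord.
    apply/eqP; rewrite eqEsubset subsetT /=; apply/subsetP => i _; apply/imsetP.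
    by exists (Ordinal m0, i).
  by rewrite Cnt0 SAT SBT fact0 mul1n [n + m]addnC.
- set a := #|SA pre|; set b := #|SB pre|; set k := size pre.
  have xpA : forall x, x \in pre -> x.1 \in SA pre by move=> x xp; apply: imset_f.
  have xpB : forall x, x \in pre -> x.2 \in SB pre by move=> x xp; apply: imset_f.
  have [y0 y0p] : exists y, y \in pre by case: (pre) Hne => // y p _; exists y; rewrite mem_head.
  have a0 : 0 < a by apply/card_gt0P; exists y0.1; exact: xpA.
  have b0 : 0 < b by apply/card_gt0P; exists y0.2; exact: xpB.
  have am : a <= m by have := max_card (mem (SA pre)); rewrite card_ord.
  have bn : b <= n by have := max_card (mem (SB pre)); rewrite card_ord.
  have sub : [set x in pre] \subset setX (SA pre) (SB pre).
    by apply/subsetP => x; rewrite !inE => xp; rewrite xpA ?xpB.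
  have ck : #|[set x in pre]| = k by rewrite cardsE (card_uniqP Hu).
  have kab : k <= a * b by rewrite -ck -cardsX subset_leq_card.
  set C1 := [set x : P | (x.1 \in SA pre) && (x.2 \in SB pre) && (x \notin pre)].
  set C2 := [set x : P | (x.1 \in SA pre) && (x.2 \notin SB pre)].
  set C3 := [set x : P | (x.1 \notin SA pre) && (x.2 \in SB pre)].
  have cC1 : #|C1| = a * b - k.
    have -> : C1 = setX (SA pre) (SB pre) :\: [set x in pre] by apply/setP => x; rewrite !inE andbC.
    by rewrite cardsD (setIidPr sub) ck cardsX.
  have cC2 : #|C2| = a * (n - b).
    have -> : C2 = setX (SA pre) (~: SB pre) by apply/setP => x; rewrite !inE.
    have := cardsC (SB pre); rewrite card_ord -/a -/b => HC.
    have HC' : #|~: SB pre| = n - b by apply/eqP; rewrite -(eqn_add2l b) HC subnKC.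
    by rewrite cardsX -/b HC'.
  have cC3 : #|C3| = (m - a) * b.
    have -> : C3 = setX (~: SA pre) (SB pre) by apply/setP => x; rewrite !inE.
    have := cardsC (SA pre); rewrite card_ord -/a -/b => HC.
    have HC' : #|~: SA pre| = m - a by apply/eqP; rewrite -(eqn_add2l a) HC subnKC.
    by rewrite cardsX -/a HC' mulnC.
  set M := (m + n - 1)`!.
  set W := r`! * (a + n - 1)`! * (b + m - 1)`!.
  have IHx : forall x, x \notin pre -> Cnt (rcons pre x) r *
      (#|x.1 |: SA pre| + #|x.2 |: SB pre| - 1)`! * M =
      r`! * (#|x.1 |: SA pre| + n - 1)`! * (#|x.2 |: SB pre| + m - 1)`!.
    move=> x xp; rewrite -SA_rcons -SB_rcons; apply: IH.
    - by rewrite rcons_uniq xp Hu.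
    - by case: (pre).
    - by rewrite size_rcons addSn -addnS.
  have pw : forall x : P, (if (x \notin pre) && meets x pre then Cnt (rcons pre x) r else 0) * ((a + b)`! * M)
      = (x \in C1) * ((a + b) * W) + (x \in C2) * ((b + m) * W) + (x \in C3) * ((a + n) * W).
    move=> x; rewrite meetsE !inE.
    case xa: (x.1 \in SA pre); case xb: (x.2 \in SB pre); case xp: (x \in pre) => //=.
    + have := IHx x; rewrite xp cardsU1 cardsU1 xa xb /= !add0n => /(_ isT) H.
      rewrite -/a -/b -/W in H.
      rewrite mul1n !mul0n !addn0 (factP (a + b)); last by lia.
      rewrite -H; ring.
    + by rewrite (xpB x xp) in xb.
    + have := IHx x; rewrite xp cardsU1 cardsU1 xa xb /= !add0n => /(_ isT) H.
      rewrite -/a -/b in H.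
      have E1 : a + (1 + b) - 1 = a + b by lia.
      have E2 : 1 + b + m - 1 = b + m by lia.
      rewrite E1 E2 (factP (b + m)) in H; last by lia.
      rewrite ?mul1n ?mul0n ?add0n ?addn0 /W.
      rewrite mulnA H; ring.
    + by rewrite (xpA x xp) in xa.
    + have := IHx x; rewrite xp cardsU1 cardsU1 xa xb /= !add0n => /(_ isT) H.
      rewrite -/a -/b in H.
      have E1 : 1 + a + b - 1 = a + b by lia.
      have E2 : 1 + a + n - 1 = a + n by lia.
      rewrite E1 E2 (factP (a + n)) in H; last by lia.
      rewrite ?mul1n ?mul0n ?add0n ?addn0 /W.
      rewrite mulnA H; ring.
  rewrite CntS.
  apply/eqP; rewrite -(eqn_pmul2l (_ : 0 < a + b)); last by lia.
  apply/eqP.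
  have -> : (a + b) * ((\sum_(x : P) (if (x \notin pre) && meets x pre then Cnt (rcons pre x) r else 0)) * (a + b - 1)`! * M)
     = \sum_(x : P) (if (x \notin pre) && meets x pre then Cnt (rcons pre x) r else 0) * ((a + b)`! * M).
    rewrite -big_distrl /= (factP (a + b)); last by lia.
    ring.
  rewrite (eq_bigr _ (fun x _ => pw x)) !big_split /= !sum_ind cC1 cC2 cC3 factS.
  rewrite /W.
  set X1 := (a + n - 1)`!; set X2 := (b + m - 1)`!.
  have [c Hc] : exists c, a * b = k + c by exists (a * b - k); lia.
  have [m' Hm] : exists m', m = a + m' by exists (m - a); lia.
  have [n' Hn] : exists n', n = b + n' by exists (n - b); lia.
  have Hr : r.+1 = c + a * n' + m' * b + m' * n'.
    have H2 : k + r.+1 = (a + m') * (b + n') by rewrite -Hm -Hn.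
    nia.
  rewrite Hr.
  have -> : a * b - k = c by lia.
  have -> : n - b = n' by lia.
  have -> : m - a = m' by lia.
  rewrite Hm Hn; ring.
Qed.
End K3.


Theorem theorem2p1 (m n : nat) (hm : 0 < m) (hn : 0 < n) :
  num_shellings (Kmn_edges m n) * (m + n - 1)`! = m`! * n`! * (m * n)`!.
Proof.
have mn0 : 0 < m * n by rewrite muln_gt0 hm hn.
rewrite /num_shellings card_tuples.
rewrite (count_transfer (@fe_inj m n)); last first.
  by move=> s /and4P[_ _ Hall _]; rewrite -Kmn_fe.
rewrite card_Kmn (eq_count (fun u => shell_char u mn0)).
have cP : #|{: 'I_m * 'I_n}| = m * n by rewrite card_prod !card_ord.
move: cP; case E : (m * n) => [|N] cP; first by rewrite E in mn0.
rewrite count_allseqsS.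
have HS : forall x : 'I_m * 'I_n, count (fun s => (size (x :: s) == N.+1) &&
     okp [:: x] s) (allseqs _ N) = Cnt [:: x] N.
  move=> x; rewrite /Cnt; apply: eq_in_count => s; rewrite mem_allseqs /= eqSS => ->.
  by [].
rewrite (eq_bigr _ (fun x _ => HS x)) big_distrl /=.
have HF : forall x : 'I_m * 'I_n, Cnt [:: x] N * (m + n - 1)`! = N`! * n`! * m`!.
  move=> x.
  have SA1 : SA [:: x] = [set x.1].
    apply/setP => i; rewrite inE; apply/imsetP/eqP => [[y]|->].
    - by rewrite inE => /eqP -> ->.
    - by exists x; rewrite ?inE.
  have SB1 : SB [:: x] = [set x.2].
    apply/setP => i; rewrite inE; apply/imsetP/eqP => [[y]|->].
    - by rewrite inE => /eqP -> ->.
    - by exists x; rewrite ?inE.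
  have := @cnt_formula m n N [:: x] isT isT; rewrite E SA1 SB1 !cards1 /= => /(_ erefl).
  have -> : 1 + n - 1 = n by lia.
  have -> : 1 + m - 1 = m by lia.
  by rewrite muln1.
rewrite (eq_bigr _ (fun x _ => HF x)) sum_nat_const cP factS; ring.
Qed.
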